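(* A circular net $f:\mathbb Z^2\to\mathbb R^N$ (in general position) is a discrete isothermic net if and only if the function $q(u)=q(f,f_1,f_{12},f_2)$ satisfies, for every $u\in\mathbb Z^2$, $$q\cdot q_{-1,-2}=q_{-1}\cdot q_{-2},$$ where $q_{-1}=q(u-e_1)=q(f_{-1},f,f_2,f_{-1,2})$, $q_{-2}=q(u-e_2)=q(f_{-2},f_{1,-2},f_1,f)$, and $q_{-1,-2}=q(u-e_1-e_2)=q(f_{-1,-2},f_{-2},f,f_{-1})$.
   Context: Notation: for $f:\mathbb Z^m\to\mathbb R^N$, $f=f(u)$, $f_i=f(u+e_i)$, $f_{ij}=f(u+e_i+e_j)$ with $e_i$ the unit vectors; negative indices denote backward shifts, e.g. $f_{-1}=f(u-e_1)$, $f_{1,-2}=f(u+e_1-e_2)$. A Q-net is a map such that each elementary quadrilateral $(f,f_i,f_{ij},f_j)$ ($i\ne j$) is planar, assumed non-degenerate (distinct vertices, no three collinear, diagonals meeting in a point distinct from the vertices). Two planar quadrilaterals $(A,B,C,D)$, $(A^*,B^*,C^*,D^* )$ are dual if $A^*B^*\parallel AB$, $B^*C^*\parallel BC$, $C^*D^*\parallel CD$, $D^*A^*\parallel DA$, $A^*C^*\parallel BD$, $B^*D^*\parallel AC$. A Q-net $f$ is a discrete Koenigs net if there is a Q-net $f^*$ with every $(f^*,f^*_i,f^*_{ij},f^*_j)$ dual to $(f,f_i,f_{ij},f_j)$. A circular net is a Q-net all of whose elementary quadrilaterals have their four vertices on a circle. A discrete isothermic net is a circular net which is a discrete Koenigs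 net. For four concircular points $a,b,c,d\in\mathbb R^N$, their cross-ratio is $q(a,b,c,d)=(a-b)(b-c)^{-1}(c-d)(d-a)^{-1}$, computed after identifying a $2$-plane containing them with $\mathbb C$ (complex multiplication); it is real and independent of the identification (equivalently, computed in the Clifford algebra of $\mathbb R^N$). *)

(* Defs.v *)
(* Points of R^N are row vectors 'rV[R]_N over a real closed
   field R (the reals being the motivating instance). *)
From HB Require Import structures.
From mathcomp Require Import all_boot all_order all_algebra.
Set Implicit Arguments. Unset Strict Implicit. Unset Printing Implicit Defensive.
Import Order.TTheory GRing.Theory Num.Theory.
Local Open Scope ring_scope.

Section Geometry.
Variables (R : rcfType) (N : nat).
Local Notation pt := 'rV[R]_N.

Definition dotv (u v : pt) : R := \sum_(i < N) u 0 i * v 0 i.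
Definition norm2 (u : pt) : R := dotv u u.

Definition collinear (X Y Z : pt) : Prop := (\rank (col_mx (Y - X) (Z - X)) <= 1)%N.

Definition planar4 (A B C D : pt) : Prop :=
  (\rank (col_mx (B - A) (col_mx (C - A) (D - A))) <= 2)%N.

Definition parallel (u v : pt) : Prop := (\rank (col_mx u v) <= 1)%N.

Definition nondeg_quad (A B C D : pt) : Prop :=
  [/\ [/\ A <> B, A <> C, A <> D & [/\ B <> C, B <> D & C <> D]],
      [/\ ~ (collinear A B C), ~ (collinear A B D), ~ (collinear A C D)
        & ~ (collinear B C D)] &
      (exists P : pt, exists s t : R,
        [/\ P = A + s *: (C - A), P = B + t *: (D - B)
          & [/\ P <> A, P <> B, P <> C & P <> D]])].

Definition good_quad (A B C D : pt) : Prop := planar4 A B C D /\ nondeg_quad A B C D.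

Definition dual_quads (A B C D As Bs Cs Ds : pt) : Prop :=
  [/\ parallel (Bs - As) (B - A), parallel (Cs - Bs) (C - B),
      parallel (Ds - Cs) (D - C), parallel (As - Ds) (A - D)
    & [/\ parallel (Cs - As) (D - B) & parallel (Ds - Bs) (C - A)]].

Definition concircular (A B C D : pt) : Prop :=
  planar4 A B C D /\
  exists c : pt, [/\ norm2 (B - c) = norm2 (A - c), norm2 (C - c) = norm2 (A - c)
                   & norm2 (D - c) = norm2 (A - c)].

(* Cross-ratio q(a,b,c,d) = (a-b)(b-c)^{-1}(c-d)(d-a)^{-1} computed in the
   Clifford algebra of R^N, where v^{-1} = v / |v|^2.  For concircular points
   this Clifford number is real, i.e. equal to its scalar part; the scalar part
   of the Clifford product x y z w of four vectors is
   (x.y)(z.w) - (x.z)(y.w) + (x.w)(y.z). *)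
Definition clifford_scalar4 (x y z w : pt) : R :=
  dotv x y * dotv z w - dotv x z * dotv y w + dotv x w * dotv y z.

Definition cross_ratio (a b c d : pt) : R :=
  clifford_scalar4 (a - b) (b - c) (c - d) (d - a) / (norm2 (b - c) * norm2 (d - a)).

(* Nets on Z^2: f a b = f(u) with u = (a,b); f_1 = f (a+1) b, f_2 = f a (b+1). *)
Definition elem_quad (P : pt -> pt -> pt -> pt -> Prop) (f : int -> int -> pt)
  (a b : int) : Prop := P (f a b) (f (a + 1) b) (f (a + 1) (b + 1)) (f a (b + 1)).

Definition Qnet (f : int -> int -> pt) : Prop := forall a b, elem_quad good_quad f a b.

Definition koenigs_net (f : int -> int -> pt) : Prop :=
  Qnet f /\ exists fs : int -> int -> pt, Qnet fs /\
    forall a b, dual_quads (f a b) (f (a + 1) b) (f (a + 1) (b + 1)) (f a (b + 1))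
                           (fs a b) (fs (a + 1) b) (fs (a + 1) (b + 1)) (fs a (b + 1)).

Definition circular_net (f : int -> int -> pt) : Prop :=
  Qnet f /\ forall a b, elem_quad concircular f a b.

Definition isothermic_net (f : int -> int -> pt) : Prop :=
  circular_net f /\ koenigs_net f.

Definition qnet (f : int -> int -> pt) (a b : int) : R :=
  cross_ratio (f a b) (f (a + 1) b) (f (a + 1) (b + 1)) (f a (b + 1)).

End Geometry.

(* Main.v *)
Require Import Defs.
From HB Require Import structures.
From mathcomp Require Import all_boot all_order all_algebra.
From mathcomp Require Import ring lra zify.
From Stdlib Require Import ClassicalEpsilon.
Import Order.TTheory GRing.Theory Num.Theory.
Local Open Scope ring_scope.
Set Implicit Arguments. Unset Strict Implicit. Unset Printing Implicit Defensive.

Ltac vec := apply/rowP => i; rewrite !mxE; ring.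
Ltac vecf := apply/rowP => i; rewrite !mxE; field.

Section Lin.
Variables (R : rcfType) (N : nat).
Local Notation pt := 'rV[R]_N.

Lemma dotvDl (x y z : pt) : dotv (x + y) z = dotv x z + dotv y z.
Proof. rewrite /dotv -big_split /=; apply: eq_bigr => i _; by rewrite mxE mulrDl. Qed.
Lemma dotvC (x y : pt) : dotv x y = dotv y x.
Proof. rewrite /dotv; apply: eq_bigr => i _; by rewrite mulrC. Qed.
Lemma dotvDr (x y z : pt) : dotv z (x + y) = dotv z x + dotv z y.
Proof. by rewrite dotvC dotvDl !(dotvC z). Qed.
Lemma dotvZl a (x y : pt) : dotv (a *: x) y = a * dotv x y.
Proof. rewrite /dotv mulr_sumr; apply: eq_bigr => i _; by rewrite mxE mulrA. Qed.
Lemma dotvZr a (x y : pt) : dotv y (a *: x) = a * dotv y x.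
Proof. by rewrite dotvC dotvZl dotvC. Qed.

Lemma norm2_gt0 (x : pt) : x != 0 -> 0 < norm2 x.
Proof.
move=> nx; rewrite /norm2 /dotv.
have [i Hi] : exists i, x 0 i != 0.
  apply/existsP; apply: contraR nx; rewrite negb_exists => /forallP H.
  apply/eqP/rowP => i; rewrite mxE; move: (H i); by rewrite negbK => /eqP.
rewrite (bigD1 i) //= ltr_pwDl //; first by rewrite lt0r sqrf_eq0 Hi /= -expr2 sqr_ge0.
by apply: sumr_ge0 => j _; rewrite -expr2 sqr_ge0.
Qed.
Lemma norm2_neq0 (x : pt) : x != 0 -> norm2 x != 0.
Proof. by move=> /norm2_gt0; rewrite lt0r => /andP[]. Qed.

Definition comb (u w : pt) (a b : R) : pt := a *: u + b *: w.

Lemma dot_comb u w a1 b1 a2 b2 :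
  dotv (comb u w a1 b1) (comb u w a2 b2) =
  a1 * a2 * dotv u u + (a1 * b2 + b1 * a2) * dotv u w + b1 * b2 * dotv w w.
Proof.
rewrite /comb !dotvDl !dotvDr !dotvZl !dotvZr (dotvC w u).
ring.
Qed.


Lemma col_sub_l m1 m2 (x : 'M[R]_(m1,N)) (y : 'M[R]_(m2,N)) : (x <= col_mx x y)%MS.
Proof. by rewrite -addsmxE addsmxSl. Qed.
Lemma col_sub_r m1 m2 (x : 'M[R]_(m1,N)) (y : 'M[R]_(m2,N)) : (y <= col_mx x y)%MS.
Proof. by rewrite -addsmxE addsmxSr. Qed.

Lemma par_scale (x y : pt) a : x = a *: y -> parallel x y.
Proof.
move=> ->; rewrite /parallel.
apply: leq_trans (mxrankS _) (rank_leq_row y).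
by rewrite col_mx_sub submx_refl andbT scalemx_sub.
Qed.
Lemma par_x0 (x : pt) : parallel x 0.
Proof.
rewrite /parallel; apply: leq_trans (mxrankS _) (rank_leq_row x).
by rewrite col_mx_sub submx_refl sub0mx.
Qed.
Lemma scale_par (x y : pt) : parallel x y -> y != 0 -> exists a, x = a *: y.
Proof.
rewrite /parallel => Hr ny.
have Hy : \rank y = 1%N by rewrite rank_rV ny.
have := mxrank_leqif_sup (col_sub_r x y); rewrite Hy => Hl.
have : (col_mx x y <= y)%MS.
  by case: Hl => Hle <-; rewrite eqn_leq Hle Hr.
by rewrite col_mx_sub => /andP[/sub_rVP].
Qed.

Definition indep (u w : pt) := forall a b, a *: u + b *: w = 0 -> a = 0 /\ b = 0.

Lemma npar_indep (x y : pt) : ~ parallel x y -> indep x y.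
Proof.
move=> Hn a b Hab.
have [a0|a0] := eqVneq a 0.
  move: Hab; rewrite a0 scale0r add0r => /eqP; rewrite scaler_eq0 => /orP[/eqP -> //|/eqP y0].
  by case: Hn; rewrite y0; apply: par_x0.
case: Hn; apply: (@par_scale _ _ (- b / a)).
have Hx : a *: x = - (b *: y) by apply/eqP; rewrite -addr_eq0 Hab.
by rewrite -[x](scalerK a0) Hx scalerN scalerA -scaleNr mulrC mulNr.
Qed.

Lemma npar_comb (u w : pt) a b c d : indep u w -> a * d - b * c != 0 ->
  ~ parallel (comb u w a b) (comb u w c d).
Proof.
move=> Hi Hd Hp.
have [y0|ny] := eqVneq (comb u w c d) 0.
  have [c0 d0] := Hi c d y0; by move: Hd; rewrite c0 d0 !mulr0 subrr eqxx.
have [k Hk] := scale_par Hp ny.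
have [e1 e2] : a - k * c = 0 /\ b - k * d = 0.
  have E : a *: u + b *: w - (k *: (c *: u) + k *: (d *: w)) = 0.
    by rewrite -scalerDr -Hk subrr.
  by apply: Hi; rewrite !scalerBl -!scalerA -E opprD addrACA.
move: Hd; rewrite (subr0_eq e1) (subr0_eq e2).
by move=> /eqP; apply; ring.
Qed.



Definition qpar (A B C D u w : pt) (s t : R) :=
  [/\ indep u w, C = A + u, B = A + s *: u - t *: w, D = A + s *: u + (1 - t) *: w
    & [/\ s != 0, s != 1, t != 0 & t != 1]].

Lemma good_params A B C D : good_quad A B C D -> exists u w s t, qpar A B C D u w s t.
Proof.
case=> _ [[AB AC AD [BC BD CD]] [nABC _ _ _] [P [s [t [HP1 HP2 [PA PB PC PD]]]]]].
exists (C - A), (D - B), s, t.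
have eB : B = A + s *: (C - A) - t *: (D - B) by rewrite -HP1 HP2; vec.
split => //.
- move=> al be H.
  have Hi := npar_indep nABC.
  have := Hi be (- (be * s + t * al)).
  have -> : be *: (B - A) + - (be * s + t * al) *: (C - A) = - t *: (al *: (C - A) + be *: (D - B)).
    rewrite {1}eB; vec.
  rewrite H scaler0 => /(_ erefl) [be0 _].
  move: H; rewrite be0 scale0r addr0 => /eqP; rewrite scaler_eq0 subr_eq0 => /orP[/eqP //|/eqP CA].
  by case: AC.
- vec.
- have eD : D = (D - B) + B by rewrite subrK.
  by rewrite {1}eD {2}eB; vec.
- split.
  + by apply/eqP => s0; apply: PA; rewrite HP1 s0 scale0r addr0.
  + by apply/eqP => s1; apply: PC; rewrite HP1 s1 scale1r; vec.
  + by apply/eqP => t0; apply: PB; rewrite HP2 t0 scale0r addr0.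
  + by apply/eqP => t1; apply: PD; rewrite HP2 t1 scale1r; vec.
Qed.


Lemma norm2_comb u w a b : norm2 (comb u w a b) =
  a * a * dotv u u + (a * b + b * a) * dotv u w + b * b * dotv w w.
Proof. exact: dot_comb. Qed.

Lemma comb_neq0 u w a b : indep u w -> (a != 0) || (b != 0) -> comb u w a b != 0.
Proof. move=> Hi Hab; apply/eqP => /Hi [a0 b0]; by move: Hab; rewrite a0 b0 eqxx. Qed.

Lemma norm2_vcomb (v u w : pt) a b : norm2 (v + comb u w a b) = norm2 v + 2 * a * dotv v u + 2 * b * dotv v w +
   (a * a * dotv u u + (a * b + b * a) * dotv u w + b * b * dotv w w).
Proof. rewrite /norm2 /comb !dotvDl !dotvDr !dotvZl !dotvZr (dotvC u v) (dotvC w v) (dotvC w u); ring. Qed.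

Lemma concirc_rel (A u w : pt) s t :
  concircular A (A + s *: u - t *: w) (A + u) (A + s *: u + (1 - t) *: w) ->
  s * (1 - s) * dotv u u = t * (1 - t) * dotv w w.
Proof.
case=> _ [c [eB eC eD]].
have e0 : A - c = (A - c) + comb u w 0 0 by rewrite /comb !scale0r !addr0.
have e1 : A + s *: u - t *: w - c = (A - c) + comb u w s (- t) by rewrite /comb; vec.
have e2 : A + u - c = (A - c) + comb u w 1 0 by rewrite /comb; vec.
have e3 : A + s *: u + (1 - t) *: w - c = (A - c) + comb u w s (1 - t) by rewrite /comb; vec.
move: eB eC eD; rewrite e1 e2 e3 {2 4 6}e0 !norm2_vcomb.
set v := A - c => eB eC eD.
set U := dotv u u in eB eC eD *; set W := dotv w w in eB eC eD *.
set X := dotv u w in eB eC eD *; set vu := dotv v u in eB eC eD *; set vw := dotv v w in eB eC eD *.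
set nv := norm2 v in eB eC eD.
have hB : 2*s*vu - 2*t*vw + s*s*U - 2*s*t*X + t*t*W = 0.
  by move/eqP: eB; rewrite -subr_eq0 => /eqP <-; ring.
have hC : 2*vu + U = 0.
  by move/eqP: eC; rewrite -subr_eq0 => /eqP <-; ring.
have hD : 2*s*vu + 2*(1-t)*vw + s*s*U + 2*s*(1-t)*X + (1-t)*(1-t)*W = 0.
  by move/eqP: eD; rewrite -subr_eq0 => /eqP <-; ring.
apply/eqP; rewrite -subr_eq0; apply/eqP.
have -> : s * (1 - s) * U - t * (1 - t) * W =
  - ((1-t) * (2*s*vu - 2*t*vw + s*s*U - 2*s*t*X + t*t*W)
     + t * (2*s*vu + 2*(1-t)*vw + s*s*U + 2*s*(1-t)*X + (1-t)*(1-t)*W)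
     - s * (2*vu + U)) by ring.
by rewrite hB hC hD; ring.
Qed.


Lemma cr_form (A B C D u w : pt) s t : qpar A B C D u w s t -> concircular A B C D ->
  let q := cross_ratio A B C D in
  [/\ q * t * norm2 (D - A) = (t - 1) * norm2 (B - A),
      q * (t - 1) * norm2 (C - B) = t * norm2 (C - D),
      q * (- s) * norm2 (B - C) = (1 - s) * norm2 (B - A)
    & q * (s - 1) * norm2 (D - A) = s * norm2 (D - C)].
Proof.
case=> Hi eC eB eD [s0 s1 t0 t1] Hc; rewrite eC eB eD in Hc *.
have rel := concirc_rel Hc.
have s1' : 1 - s != 0 by rewrite subr_eq0 eq_sym.
have t1' : 1 - t != 0 by rewrite subr_eq0 eq_sym.
have HU : dotv u u = t * (1 - t) * dotv w w / (s * (1 - s)).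
  by rewrite -rel; field; rewrite s0 s1'.
have dAB : A - (A + s *: u - t *: w) = comb u w (-s) t by rewrite /comb; vec.
have dBC : A + s *: u - t *: w - (A + u) = comb u w (s-1) (-t) by rewrite /comb; vec.
have dCD : A + u - (A + s *: u + (1 - t) *: w) = comb u w (1-s) (t-1) by rewrite /comb; vec.
have dDA : A + s *: u + (1 - t) *: w - A = comb u w s (1-t) by rewrite /comb; vec.
have dBA : A + s *: u - t *: w - A = comb u w s (-t) by rewrite /comb; vec.
have dCB : A + u - (A + s *: u - t *: w) = comb u w (1-s) t by rewrite /comb; vec.
have dDC : A + s *: u + (1 - t) *: w - (A + u) = comb u w (s-1) (1-t) by rewrite /comb; vec.
move=> q; rewrite /q /cross_ratio /clifford_scalar4 /norm2 dAB dBC dCD dDA dBA dCB dDC.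
have nBC : dotv (comb u w (s-1) (-t)) (comb u w (s-1) (-t)) != 0.
  apply: norm2_neq0; apply: comb_neq0 => //; by rewrite subr_eq0 s1.
have nDA : dotv (comb u w s (1-t)) (comb u w s (1-t)) != 0.
  by apply: norm2_neq0; apply: comb_neq0 => //; rewrite s0.
move: nBC nDA; rewrite !dot_comb => nBC nDA.
rewrite HU.
split; field; rewrite s1' s0 /=; apply/andP; split.
1,3,5,7: apply: contra_neq nDA => H; apply: (mulIf s1').
all: try (apply: contra_neq nBC => H; apply: (mulIf (mulf_neq0 s0 s1'))).
all: move: H; rewrite -rel => H; rewrite mul0r -H; ring.
Qed.


Lemma indep_neq0r (u w : pt) : indep u w -> w != 0.
Proof. move=> Hi; apply/eqP => w0; have := Hi 0 1; rewrite w0 scale0r scaler0 addr0 => /(_ erefl) [_ /eqP]; by rewrite oner_eq0. Qed.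
Lemma indep_neq0l (u w : pt) : indep u w -> u != 0.
Proof. move=> Hi; apply/eqP => u0; have := Hi 1 0; rewrite u0 scale0r scaler0 addr0 => /(_ erefl) [/eqP]; by rewrite oner_eq0. Qed.

Lemma dual_rel (A B C D u w As Bs Cs Ds : pt) s t l1 l2 l3 l4 :
  qpar A B C D u w s t ->
  Bs - As = l1 *: (B - A) -> Cs - Bs = l2 *: (C - B) ->
  Cs - Ds = l3 *: (C - D) -> Ds - As = l4 *: (D - A) ->
  parallel (Cs - As) (D - B) -> parallel (Ds - Bs) (C - A) ->
  [/\ l1 * s + l2 * (1 - s) = 0, l2 * t + l3 * (1 - t) = 0,
      l3 * (1 - s) + l4 * s = 0 & l1 * t + l4 * (1 - t) = 0].
Proof.
case=> Hi eC eB eD _ E1 E2 E3 E4 P1 P2.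
have eDB : D - B = w by rewrite eB eD; vec.
have eCA : C - A = u by rewrite eC; vec.
have nw : D - B != 0 by rewrite eDB (indep_neq0r Hi).
have nu : C - A != 0 by rewrite eCA (indep_neq0l Hi).
have [k1 Hk1] := scale_par P1 nw.
have [k2 Hk2] := scale_par P2 nu.
have R1 : (l1*s + l2*(1-s)) *: u + (l2*t - l1*t - k1) *: w = 0.
  transitivity (l2*:(C-B) + l1*:(B-A) - k1*:(D-B)); first by rewrite eB eC eD; vec.
  rewrite -E2 -E1 -Hk1; vec.
have R2 : (l2*(1-s) - l3*(1-s) - k2) *: u + (l2*t + l3*(1-t)) *: w = 0.
  transitivity (l2*:(C-B) - l3*:(C-D) - k2*:(C-A)); first by rewrite eB eC eD; vec.
  rewrite -E2 -E3 -Hk2; vec.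
have R3 : (l3*(1-s) + l4*s) *: u + (-l3*(1-t) + l4*(1-t) - k1) *: w = 0.
  transitivity (l3*:(C-D) + l4*:(D-A) - k1*:(D-B)); first by rewrite eB eC eD; vec.
  rewrite -E3 -E4 -Hk1; vec.
have R4 : (l4*s - l1*s - k2) *: u + (l4*(1-t) + l1*t) *: w = 0.
  transitivity (l4*:(D-A) - l1*:(B-A) - k2*:(C-A)); first by rewrite eB eC eD; vec.
  rewrite -E4 -E1 -Hk2; vec.
split; [exact: (Hi _ _ R1).1 | exact: (Hi _ _ R2).2 | exact: (Hi _ _ R3).1 | ].
by rewrite addrC; exact: (Hi _ _ R4).2.
Qed.


Lemma ncol_neq (X Y Z : pt) : ~ collinear X Y Z -> [/\ X <> Y, X <> Z & Y <> Z].
Proof.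
move=> Hn; split => E; apply: Hn; rewrite /collinear -/(parallel _ _).
- by rewrite E subrr; apply: (@par_scale _ _ 0); rewrite scale0r.
- by rewrite E subrr; apply: par_x0.
- by rewrite E; apply: (@par_scale _ _ 1); rewrite scale1r.
Qed.

Lemma comb_sub_span (u w : pt) a b : (comb u w a b <= col_mx u w)%MS.
Proof. by rewrite /comb addmx_sub // scalemx_sub // ?col_sub_l ?col_sub_r. Qed.

Lemma combB (u w : pt) a b c d : comb u w a b - comb u w c d = comb u w (a - c) (b - d).
Proof. rewrite /comb; vec. Qed.

Lemma scale_neq0_ne (v : pt) a : v != 0 -> a *: v = 0 -> a = 0.
Proof. by move=> nv /eqP; rewrite scaler_eq0 (negbTE nv) orbF => /eqP. Qed.

Lemma good_coords (As Bs Cs Ds u w : pt) x1 y1 x2 y2 x3 y3 sg tu :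
 indep u w -> Bs - As = comb u w x1 y1 -> Cs - As = comb u w x2 y2 -> Ds - As = comb u w x3 y3 ->
 x1*y2 - y1*x2 != 0 -> x1*y3 - y1*x3 != 0 -> x2*y3 - y2*x3 != 0 ->
 (x2-x1)*(y3-y1) - (y2-y1)*(x3-x1) != 0 ->
 sg * x2 = x1 + tu*(x3 - x1) -> sg*y2 = y1 + tu*(y3-y1) -> sg != 0 -> sg != 1 -> tu != 0 -> tu != 1 ->
 good_quad As Bs Cs Ds.
Proof.
move=> Hi e1 e2 e3 d12 d13 d23 d123 hx hy sg0 sg1 tu0 tu1.
have eCB : Cs - Bs = comb u w (x2 - x1) (y2 - y1) by rewrite -combB -e1 -e2; vec.
have eDB : Ds - Bs = comb u w (x3 - x1) (y3 - y1) by rewrite -combB -e1 -e3; vec.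
have c1 : ~ collinear As Bs Cs by rewrite /collinear -/(parallel _ _) e1 e2; apply: npar_comb.
have c2 : ~ collinear As Bs Ds by rewrite /collinear -/(parallel _ _) e1 e3; apply: npar_comb.
have c3 : ~ collinear As Cs Ds by rewrite /collinear -/(parallel _ _) e2 e3; apply: npar_comb.
have c4 : ~ collinear Bs Cs Ds by rewrite /collinear -/(parallel _ _) eCB eDB; apply: npar_comb.
have [AB AC BC] := ncol_neq c1.
have [_ AD BD] := ncol_neq c2.
have [_ _ CD] := ncol_neq c4.
split.
  rewrite /planar4 e1 e2 e3; apply: leq_trans (mxrankS _) (rank_leq_row (col_mx u w)).
  by rewrite !col_mx_sub !comb_sub_span.
split => //.
have HP : As + sg *: (Cs - As) = Bs + tu *: (Ds - Bs).
  have eB : Bs = As + comb u w x1 y1 by rewrite -e1; vec.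
  have eC : Cs = As + comb u w x2 y2 by rewrite -e2; vec.
  have eD : Ds = As + comb u w x3 y3 by rewrite -e3; vec.
  rewrite eB eC eD; transitivity (As + comb u w (sg*x2) (sg*y2)); first by rewrite /comb; vec.
  rewrite hx hy /comb; vec.
exists (As + sg *: (Cs - As)), sg, tu; split => //.
have nCA : Cs - As != 0 by rewrite subr_eq0; apply/eqP => E; apply: AC.
have nDB : Ds - Bs != 0 by rewrite subr_eq0; apply/eqP => E; apply: BD.
split => E.
- have E' : sg *: (Cs - As) = (As + sg *: (Cs - As)) - As by vec.
  rewrite E subrr in E'; move: sg0; by rewrite (scale_neq0_ne nCA E') eqxx.
- have E' : tu *: (Ds - Bs) = (Bs + tu *: (Ds - Bs)) - Bs by vec.
  rewrite -HP E subrr in E'; move: tu0; by rewrite (scale_neq0_ne nDB E') eqxx.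
- have E' : (sg - 1) *: (Cs - As) = (As + sg *: (Cs - As)) - Cs by vec.
  rewrite E subrr in E'; move: sg1; by rewrite -subr_eq0 (scale_neq0_ne nCA E') eqxx.
- have E' : (tu - 1) *: (Ds - Bs) = (Bs + tu *: (Ds - Bs)) - Ds by vec.
  rewrite -HP E subrr in E'; move: tu1; by rewrite -subr_eq0 (scale_neq0_ne nDB E') eqxx.
Qed.



Lemma dual_good (A B C D u w As Bs Cs Ds : pt) s t m :
  qpar A B C D u w s t -> m != 0 ->
  Bs - As = m *: (B - A) ->
  Cs - Bs = (- m * s / (1 - s)) *: (C - B) ->
  Cs - Ds = (m * s * t / ((1 - s) * (1 - t))) *: (C - D) ->
  Ds - As = (- m * t / (1 - t)) *: (D - A) ->
  good_quad As Bs Cs Ds /\ dual_quads A B C D As Bs Cs Ds.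
Proof.
case=> Hi eC eB eD [s0 s1 t0 t1] m0 E1 E2 E3 E4.
have s1' : 1 - s != 0 by rewrite subr_eq0 eq_sym.
have t1' : 1 - t != 0 by rewrite subr_eq0 eq_sym.
have e1 : Bs - As = comb u w (m*s) (-(m*t)) by rewrite E1 eB /comb; vec.
have e2 : Cs - As = comb u w 0 (-(m*t)/(1-s)).
  transitivity ((Cs - Bs) + (Bs - As)); first by vec.
  by rewrite E1 E2 eB eC /comb; vecf; rewrite ?s1' ?t1' ?s0 ?t0 ?m0.
have e3 : Ds - As = comb u w (-(m*s*t)/(1-t)) (-(m*t)) by rewrite E4 eD /comb; vecf; rewrite ?s1' ?t1' ?s0 ?t0 ?m0.
split.
  apply: (good_coords (sg := 1 - s) (tu := 1 - t) Hi e1 e2 e3).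
  - have -> : m * s * (- (m * t) / (1 - s)) - - (m * t) * 0 = - (m * m * s * t / (1 - s)) by field; rewrite ?s1' ?t1' ?s0 ?t0 ?m0.
    by rewrite oppr_eq0 !mulf_neq0 // invr_neq0.
  - have -> : m * s * - (m * t) - - (m * t) * (- (m * s * t) / (1 - t)) = - (m * m * s * t / (1 - t)) by field; rewrite ?s1' ?t1' ?s0 ?t0 ?m0.
    by rewrite oppr_eq0 !mulf_neq0 // invr_neq0.
  - have -> : 0 * - (m * t) - - (m * t) / (1 - s) * (- (m * s * t) / (1 - t)) = - (m * m * s * t * t / ((1 - s) * (1-t))) by field; rewrite ?s1' ?t1' ?s0 ?t0 ?m0.
    by rewrite oppr_eq0 !mulf_neq0 // invr_neq0 // mulf_neq0.
  - have -> : (0 - m * s) * (- (m * t) - - (m * t)) - (- (m * t) / (1 - s) - - (m * t)) * (- (m * s * t) / (1 - t) - m * s) = - (m * m * s * s * t / ((1 - s) * (1-t))) by field; rewrite ?s1' ?t1' ?s0 ?t0 ?m0.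
    by rewrite oppr_eq0 !mulf_neq0 // invr_neq0 // mulf_neq0.
  - by field; rewrite ?s1' ?t1' ?s0 ?t0 ?m0.
  - by field; rewrite ?s1' ?t1' ?s0 ?t0 ?m0.
  - done.
  - by rewrite subr_eq addrC -subr_eq subrr eq_sym.
  - done.
  - by rewrite subr_eq addrC -subr_eq subrr eq_sym.
split.
- exact: par_scale E1.
- exact: par_scale E2.
- apply: (@par_scale _ _ (m * s * t / ((1 - s) * (1 - t)))).
  by rewrite -[Ds - Cs]opprB E3 -scalerN opprB.
- apply: (@par_scale _ _ (- m * t / (1 - t))).
  by rewrite -[As - Ds]opprB E4 -scalerN opprB.
split.
- apply: (@par_scale _ _ (- m * t / (1 - s))).
  by rewrite e2 eB eD /comb; vecf; rewrite ?s1' ?t1' ?s0 ?t0 ?m0.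
- apply: (@par_scale _ _ (- m * s / (1 - t))).
  transitivity ((Ds - As) - (Bs - As)); first by vec.
  by rewrite e3 e1 eC /comb; vecf; rewrite ?s1' ?t1' ?s0 ?t0 ?m0.
Qed.


Lemma norm2N (x y : pt) : norm2 (x - y) = norm2 (y - x).
Proof. by rewrite -opprB /norm2 -scaleN1r dotvZl dotvZr mulrA mulrNN !mul1r. Qed.

Lemma qpar_neq A B C D u w s t : qpar A B C D u w s t ->
  [/\ B - A != 0, C - B != 0, D - C != 0 & D - A != 0].
Proof.
case=> Hi eC eB eD [s0 s1 t0 t1].
have s1' : 1 - s != 0 by rewrite subr_eq0 eq_sym.
have t1' : 1 - t != 0 by rewrite subr_eq0 eq_sym.
split.
- have -> : B - A = comb u w s (-t) by rewrite eB /comb; vec.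
  by apply: comb_neq0; rewrite ?s0.
- have -> : C - B = comb u w (1-s) t by rewrite eB eC /comb; vec.
  by apply: comb_neq0; rewrite ?s1'.
- have -> : D - C = comb u w (s-1) (1-t) by rewrite eD eC /comb; vec.
  by apply: comb_neq0; rewrite ?t1' ?orbT.
- have -> : D - A = comb u w s (1-t) by rewrite eD /comb; vec.
  by apply: comb_neq0; rewrite ?s0.
Qed.

End Lin.

Lemma int_ind2 (P : int -> Prop) : P 0 -> (forall b, P b -> P (b + 1)) ->
  (forall b, P (b + 1) -> P b) -> forall b, P b.
Proof.
move=> P0 Hu Hd [n|n].
- elim: n => // n IH; have := Hu _ IH; congr P; lia.
- elim: n => [|n IH].
    apply: Hd; have -> : Negz 0 + 1 = 0 by lia. done.
  apply: Hd; have -> : Negz n.+1 + 1 = Negz n by lia. done.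
Qed.

Section Integ.
Variable T : Type.

Lemma int1 (g g' : int -> T -> T) (x0 : T) :
  (forall a y, g a (g' a y) = y) ->
  exists F : int -> T, F 0 = x0 /\ forall a, F (a + 1) = g a (F a).
Proof.
move=> Hgg.
pose Fp := fix Fp (n : nat) := if n is n'.+1 then g n' (Fp n') else x0.
pose Fn := fix Fn (n : nat) := if n is n'.+1 then g' (Negz n) (Fn n') else g' (Negz 0) x0.
exists (fun a => match a with Posz n => Fp n | Negz n => Fn n end); split => // [[n|n]].
- have -> : Posz n + 1 = Posz n.+1 by lia. done.
- case: n => [|n].
    have -> : Negz 0 + 1 = Posz 0 by lia. by rewrite /= Hgg.
  have -> : Negz n.+1 + 1 = Negz n by lia. by rewrite /= Hgg.
Qed.

Lemma int2 (gH gV gV' : int -> int -> T -> T) (gH' : int -> int -> T -> T) (x0 : T) :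
  (forall a b y, gH a b (gH' a b y) = y) ->
  (forall a b y, gV a b (gV' a b y) = y) ->
  (forall a b y, gV' a b (gV a b y) = y) ->
  (forall a b x, gV (a + 1) b (gH a b x) = gH a (b + 1) (gV a b x)) ->
  exists F : int -> int -> T, F 0 0 = x0 /\ forall a b,
    F (a + 1) b = gH a b (F a b) /\ F a (b + 1) = gV a b (F a b).
Proof.
move=> HH HV HV' Hc.
have [h [h0 Hh]] := @int1 (fun a => gH a 0) (fun a => gH' a 0) x0 (fun a => HH a 0).
have Hcol : forall a, exists F : int -> T, F 0 = h a /\ forall b, F (b + 1) = gV a b (F b).
  move=> a; exact: (@int1 (gV a) (gV' a)) (h a) (HV a).
pose col a := proj1_sig (constructive_indefinite_description _ (Hcol a)).
have Hc0 : forall a, col a 0 = h a /\ forall b, col a (b + 1) = gV a b (col a b).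
  move=> a; exact: (proj2_sig (constructive_indefinite_description _ (Hcol a))).
exists col; split; first by rewrite (Hc0 0).1 h0.
move=> a b; split; last exact: (Hc0 a).2.
move: b; apply: int_ind2.
- by rewrite !(Hc0 _).1 Hh.
- move=> b IH; by rewrite !(Hc0 _).2 IH Hc.
- move=> b IH.
  rewrite -[col (a + 1) b](HV' (a + 1) b) -(Hc0 (a + 1)).2 IH (Hc0 a).2 -Hc HV'.
  done.
Qed.

End Integ.



Section Main.
Variables (R : rcfType) (N : nat).
Local Notation pt := 'rV[R]_N.

Definition QP (f : int -> int -> pt) (a b : int) (s t : R) := exists u w,
  qpar (f a b) (f (a+1) b) (f (a+1) (b+1)) (f a (b+1)) u w s t.

Lemma q_vc (f : int -> int -> pt) (a b : int) (s0 t0 s1 t1 s2 t2 s3 t3 : R) :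
  (forall a b, elem_quad (@concircular R N) f a b) ->
  QP f a b s0 t0 -> QP f (a-1) b s1 t1 -> QP f (a-1) (b-1) s2 t2 -> QP f a (b-1) s3 t3 ->
  (qnet f a b * qnet f (a - 1) (b - 1) = qnet f (a - 1) b * qnet f a (b - 1) <->
   t0*(1-s1)*(1-t2)*s3 = (1-t0)*s1*t2*(1-s3)).
Proof.
move=> Hc [u0 [w0 H0]] [u1 [w1 H1]] [u2 [w2 H2]] [u3 [w3 H3]].
have [F0 _ _ _] := cr_form H0 (Hc a b).
have [_ F2 _ _] := cr_form H2 (Hc (a-1) (b-1)).
have [_ _ F1 _] := cr_form H1 (Hc (a-1) b).
have [_ _ _ F3] := cr_form H3 (Hc a (b-1)).
have [n01 _ _ n02] := qpar_neq H0.
have [n11 _ _ _] := qpar_neq H1.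
have [_ _ _ n32] := qpar_neq H3.
case: H0 => _ _ _ _ [s00 s01 t00 t01].
case: H1 => _ _ _ _ [s10 s11 t10 t11].
case: H2 => _ _ _ _ [s20 s21 t20 t21].
case: H3 => _ _ _ _ [s30 s31 t30 t31].
rewrite /qnet.
move: F1 F2 F3 n11 n32; rewrite !subrK => F1 F2 F3 n11 n32.
rewrite (norm2N (f a b) (f a (b+1))) in F1.
rewrite (norm2N (f a b) (f (a+1) b)) in F3.
move: (norm2_neq0 n01) (norm2_neq0 n02) (norm2_neq0 n11) (norm2_neq0 n32) => N1 N2 M1 M2.
move: F0 F1 F2 F3 N1 N2 M1 M2.
set q0 := cross_ratio _ _ _ (f a (b + 1)).
set q1 := cross_ratio _ _ _ (f (a - 1) (b + 1)).
set q2 := cross_ratio _ _ _ (f (a - 1) b).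
set q3 := cross_ratio _ _ _ (f a b).
set n1 := norm2 (f (a + 1) b - f a b).
set n2 := norm2 (f a (b + 1) - f a b).
set m1 := norm2 (f a b - f (a - 1) b).
set m2 := norm2 (f a b - f a (b - 1)).
move=> F0 F1 F2 F3 N1 N2 M1 M2.
have tm1 : t0 - 1 != 0 by rewrite subr_eq0.
have t21' : t2 - 1 != 0 by rewrite subr_eq0.
have s31' : s3 - 1 != 0 by rewrite subr_eq0.
have s11' : 1 - s1 != 0 by rewrite subr_eq0 eq_sym.
have Hq0 : q0 = (t0 - 1) * n1 / (t0 * n2) by rewrite -F0; field; rewrite t00 N2.
have Hq2 : q2 = t2 * m1 / ((t2 - 1) * m2) by rewrite -F2; field; rewrite t21' M2.
have Hq1 : q1 = (1 - s1) * m1 / (- s1 * n2) by rewrite -F1; field; rewrite s10 N2.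
have Hq3 : q3 = s3 * n1 / ((s3 - 1) * m2) by rewrite -F3; field; rewrite s31' M2.
have K0 : n1 * m1 / (n2 * m2 * t0 * (t2 - 1) * s1 * (s3 - 1)) != 0.
  by rewrite !mulf_neq0 // invr_neq0 // !mulf_neq0.
have E : q0 * q2 - q1 * q3 = - (n1 * m1 / (n2 * m2 * t0 * (t2 - 1) * s1 * (s3 - 1))) *
   (t0*(1-s1)*(1-t2)*s3 - (1-t0)*s1*t2*(1-s3)).
  rewrite Hq0 Hq1 Hq2 Hq3; field.
  by rewrite N2 M2 t00 t21' s10 s31'.
split => H.
- move: E; rewrite H subrr => /esym /eqP; rewrite mulf_eq0 oppr_eq0 (negbTE K0) /= subr_eq0.
  by move/eqP.
- by apply/eqP; rewrite -subr_eq0 E H subrr mulr0.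
Qed.

Lemma choice2 (A : Type) (P : int -> int -> A -> Prop) :
  (forall a b, exists x, P a b x) -> exists g, forall a b, P a b (g a b).
Proof.
move=> H.
exists (fun a b => proj1_sig (constructive_indefinite_description _ (H a b))) => a b.
exact: (proj2_sig (constructive_indefinite_description _ (H a b))).
Qed.

Lemma dir1 (f : int -> int -> pt) (sf tf : int -> int -> R) :
  (forall a b, QP f a b (sf a b) (tf a b)) -> isothermic_net f ->
  forall a b, tf a b * (1 - sf (a-1) b) * (1 - tf (a-1) (b-1)) * sf a (b-1) =
    (1 - tf a b) * sf (a-1) b * tf (a-1) (b-1) * (1 - sf a (b-1)).
Proof.
move=> Hg [_ [_ [fs [Hqs Hd]]]].
have Hmh : forall a b, exists l, fs (a+1) b - fs a b = l *: (f (a+1) b - f a b).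
  move=> a b; have [u [w Q]] := Hg a b; have [n1 _ _ _] := qpar_neq Q.
  by case: (Hd a b) => P1 _ _ _ _; apply: scale_par P1 n1.
have Hmv : forall a b, exists l, fs a (b+1) - fs a b = l *: (f a (b+1) - f a b).
  move=> a b; have [u [w Q]] := Hg a b; have [_ _ _ n4] := qpar_neq Q.
  case: (Hd a b) => _ _ _ P4 _.
  have n4' : f a b - f a (b+1) != 0 by rewrite -opprB oppr_eq0.
  have [l Hl] := scale_par P4 n4'; exists l.
  by rewrite -opprB Hl -scalerN opprB.
have [mh Hmh'] := choice2 Hmh.
have [mv Hmv'] := choice2 Hmv.
have mh0 : forall a b, mh a b != 0.
  move=> a b; apply/eqP => E; have := Hmh' a b; rewrite E scale0r => /eqP; rewrite subr_eq0 => /eqP E'.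
  by case: (Hqs a b) => _ [[AB _ _ _] _ _]; apply: AB.
have mv0 : forall a b, mv a b != 0.
  move=> a b; apply/eqP => E; have := Hmv' a b; rewrite E scale0r => /eqP; rewrite subr_eq0 => /eqP E'.
  by case: (Hqs a b) => _ [[_ _ AD _] _ _]; apply: AD.
have DR : forall a b,
  [/\ mh a b * sf a b + mv (a+1) b * (1 - sf a b) = 0,
      mv (a+1) b * tf a b + mh a (b+1) * (1 - tf a b) = 0,
      mh a (b+1) * (1 - sf a b) + mv a b * sf a b = 0
    & mh a b * tf a b + mv a b * (1 - tf a b) = 0].
  move=> a b; have [u [w Q]] := Hg a b.
  case: (Hd a b) => _ _ _ _ [P5 P6].
  exact: (dual_rel Q (Hmh' a b) (Hmv' (a+1) b) (Hmh' a (b+1)) (Hmv' a b) P5 P6).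
move=> a b.
have [_ _ _ D0] := DR a b.
have [D1 _ _ _] := DR (a-1) b.
have [_ D2 _ _] := DR (a-1) (b-1).
have [_ _ D3 _] := DR a (b-1).
move: D1 D2 D3; rewrite !subrK => D1 D2 D3.
have hv : mh a b * mv a b * mh (a-1) b * mv a (b-1) != 0 by rewrite !mulf_neq0.
move: (mh a b) (mv a b) (mh (a-1) b) (mv a (b-1)) hv D0 D1 D2 D3 => h v h' v' hv D0 D1 D2 D3.
apply: (mulIf hv); rewrite /=.
transitivity ((h * tf a b) * ((1 - sf (a-1) b) * v) * ((1 - tf (a-1) (b-1)) * h') * (sf a (b-1) * v')); first by ring.
have -> : h * tf a b = - (v * (1 - tf a b)) by apply/eqP; rewrite -addr_eq0; apply/eqP; rewrite -D0; ring.
have -> : (1 - sf (a-1) b) * v = - (h' * sf (a-1) b) by apply/eqP; rewrite -addr_eq0; apply/eqP; rewrite -D1; ring.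
have -> : (1 - tf (a-1) (b-1)) * h' = - (v' * tf (a-1) (b-1)) by apply/eqP; rewrite -addr_eq0; apply/eqP; rewrite -D2; ring.
have -> : sf a (b-1) * v' = - (h * (1 - sf a (b-1))) by apply/eqP; rewrite -addr_eq0; apply/eqP; rewrite -D3; ring.
ring.
Qed.


Lemma QP_ne (f : int -> int -> pt) a b s t : QP f a b s t ->
  [/\ s != 0, 1 - s != 0, t != 0 & 1 - t != 0].
Proof.
case=> u [w [_ _ _ _ [s0 s1 t0 t1]]].
by split; rewrite // subr_eq0 eq_sym.
Qed.

Lemma dir2 (f : int -> int -> pt) (sf tf : int -> int -> R) :
  circular_net f ->
  (forall a b, QP f a b (sf a b) (tf a b)) ->
  (forall a b, tf a b * (1 - sf (a-1) b) * (1 - tf (a-1) (b-1)) * sf a (b-1) =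
    (1 - tf a b) * sf (a-1) b * tf (a-1) (b-1) * (1 - sf a (b-1))) ->
  isothermic_net f.
Proof.
move=> Hcirc Hg VC.
have Hq : Qnet f by case: Hcirc.
split => //; split => //.
pose rH a b := sf a b / (1 - sf a b) * ((1 - tf (a+1) b) / tf (a+1) b).
pose rV a b := sf a b * tf a b / ((1 - sf a b) * (1 - tf a b)).
have rH0 : forall a b, rH a b != 0.
  move=> a b; have [s0 s1 _ _] := QP_ne (Hg a b); have [_ _ t0 t1] := QP_ne (Hg (a+1) b).
  by rewrite /rH !mulf_neq0 // invr_neq0.
have rV0 : forall a b, rV a b != 0.
  move=> a b; have [s0 s1 t0 t1] := QP_ne (Hg a b).
  by rewrite /rV !mulf_neq0 // invr_neq0 // mulf_neq0.
have i1 : forall a b y, rH a b * ((rH a b)^-1 * y) = y.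
  by move=> a b y; rewrite mulrA divrr ?mul1r // unitfE.
have i2 : forall a b y, rV a b * ((rV a b)^-1 * y) = y.
  by move=> a b y; rewrite mulrA divrr ?mul1r // unitfE.
have i3 : forall a b y, (rV a b)^-1 * (rV a b * y) = y.
  by move=> a b y; rewrite mulrA mulVr ?mul1r // unitfE.
have cm : forall a b x, rV (a+1) b * (rH a b * x) = rH a (b+1) * (rV a b * x).
  move=> a b x.
  have := VC (a+1) (b+1); rewrite !addrK => E.
  have [s00 s01 t00 t01] := QP_ne (Hg a b).
  have [s10 s11 t10 t11] := QP_ne (Hg (a+1) b).
  have [s20 s21 t20 t21] := QP_ne (Hg a (b+1)).
  have [s30 s31 t30 t31] := QP_ne (Hg (a+1) (b+1)).
  rewrite /rH /rV !mulrA; congr (_ * x).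
  apply/eqP; rewrite -subr_eq0; apply/eqP.
  transitivity (sf a b / ((1 - sf a b) * (1 - sf (a+1) b) * (1 - sf a (b+1)) * tf (a+1) (b+1) * (1 - tf a b)) *
    (tf (a + 1) (b + 1) * (1 - sf a (b + 1)) * (1 - tf a b) * sf (a + 1) b -
    (1 - tf (a + 1) (b + 1)) * sf a (b + 1) * tf a b * (1 - sf (a + 1) b))).
    field.
    by rewrite ?s00 ?s01 ?t00 ?t01 ?s10 ?s11 ?t10 ?t11 ?s20 ?s21 ?t20 ?t21 ?s30 ?s31 ?t30 ?t31.
  by rewrite E subrr mulr0.
have [mh [mh00 Hmh]] := @int2 R (fun a b x => rH a b * x) (fun a b x => rV a b * x)
   (fun a b x => (rV a b)^-1 * x) (fun a b x => (rH a b)^-1 * x) 1 i1 i2 i3 cm.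
have mh0 : forall a b, mh a b != 0.
  have c0 : forall b, mh 0 b != 0.
    apply: int_ind2.
    - by rewrite mh00 oner_eq0.
    - by move=> b H; rewrite (Hmh 0 b).2 mulf_neq0.
    - by move=> b; rewrite (Hmh 0 b).2 mulf_eq0 negb_or => /andP[].
  move=> a b; move: a; apply: int_ind2.
  - exact: c0.
  - by move=> a H; rewrite (Hmh a b).1 mulf_neq0.
  - by move=> a; rewrite (Hmh a b).1 mulf_eq0 negb_or => /andP[].
pose mv a b := - mh a b * tf a b / (1 - tf a b).
have kv : forall a b, mv (a+1) b = - mh a b * sf a b / (1 - sf a b).
  move=> a b; have [s00 s01 _ _] := QP_ne (Hg a b); have [_ _ t10 t11] := QP_ne (Hg (a+1) b).
  rewrite /mv (Hmh a b).1 /rH; field.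
  by rewrite s01 t10 t11.
have j1 : forall a b y, (y - mh a b *: (f (a+1) b - f a b)) + mh a b *: (f (a+1) b - f a b) = y.
  by move=> a b y; rewrite subrK.
have j2 : forall a b y, (y - mv a b *: (f a (b+1) - f a b)) + mv a b *: (f a (b+1) - f a b) = y.
  by move=> a b y; rewrite subrK.
have j3 : forall a b y, (y + mv a b *: (f a (b+1) - f a b)) - mv a b *: (f a (b+1) - f a b) = y.
  by move=> a b y; rewrite addrK.
have cm2 : forall a b x,
  (x + mh a b *: (f (a+1) b - f a b)) + mv (a+1) b *: (f (a+1) (b+1) - f (a+1) b) =
  (x + mv a b *: (f a (b+1) - f a b)) + mh a (b+1) *: (f (a+1) (b+1) - f a (b+1)).
  move=> a b x; have [s00 s01 t00 t01] := QP_ne (Hg a b).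
  have [u [w [_ eC eB eD _]]] := Hg a b.
  rewrite kv (Hmh a b).2 /rV /mv eC eB eD; vecf.
  by rewrite s01 t01.
have [fs [_ Hfs]] := @int2 'rV[R]_N
   (fun a b x => x + mh a b *: (f (a+1) b - f a b))
   (fun a b x => x + mv a b *: (f a (b+1) - f a b))
   (fun a b x => x - mv a b *: (f a (b+1) - f a b))
   (fun a b x => x - mh a b *: (f (a+1) b - f a b)) 0 j1 j2 j3 cm2.
have EH : forall a b, fs (a+1) b - fs a b = mh a b *: (f (a+1) b - f a b).
  by move=> a b; rewrite (Hfs a b).1; vec.
have EV : forall a b, fs a (b+1) - fs a b = mv a b *: (f a (b+1) - f a b).
  by move=> a b; rewrite (Hfs a b).2; vec.
have DG : forall a b, elem_quad (@good_quad R N) fs a b /\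
   dual_quads (f a b) (f (a + 1) b) (f (a + 1) (b + 1)) (f a (b + 1))
     (fs a b) (fs (a + 1) b) (fs (a + 1) (b + 1)) (fs a (b + 1)).
  move=> a b; have [u [w Q]] := Hg a b.
  apply: (dual_good Q (mh0 a b) (EH a b)).
  - by rewrite EV kv.
  - by rewrite EH (Hmh a b).2 /rV mulrC !mulrA.
  - exact: EV.
exists fs; split => a b; [exact: (DG a b).1 | exact: (DG a b).2].
Qed.

End Main.


Unset Implicit Arguments.

Theorem mainTheorem12 (R : rcfType) (N : nat) (f : int -> int -> 'rV[R]_N) :
  circular_net f ->
  (isothermic_net f <->
   forall a b : int,
     qnet f a b * qnet f (a - 1) (b - 1) = qnet f (a - 1) b * qnet f a (b - 1)).
Proof.
move=> Hcirc.
have [Hq Hc] := Hcirc.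
have HP : forall a b, exists p : R * R, QP f a b p.1 p.2.
  move=> a b; have [u [w [s [t Q]]]] := good_params (Hq a b).
  by exists (s, t), u, w.
have [g Hg] := choice2 HP.
split.
- move=> Hiso a b.
  apply/(q_vc Hc (Hg a b) (Hg (a-1) b) (Hg (a-1) (b-1)) (Hg a (b-1))).
  exact: (@dir1 _ _ f (fun a b => (g a b).1) (fun a b => (g a b).2) Hg Hiso).
- move=> Hrel.
  apply: (@dir2 _ _ f (fun a b => (g a b).1) (fun a b => (g a b).2) Hcirc Hg) => a b.
  by apply/(q_vc Hc (Hg a b) (Hg (a-1) b) (Hg (a-1) (b-1)) (Hg a (b-1))).
Qed.
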